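(* Let $G=(V,E)$ be a graph with a partition $(A,B)$ of its vertex set. Let $G_1=(V,E_1)$ with $E_1=E\cup\{\{a,b\}: a,b\in B,\ a\neq b\}$. Then $\mathrm{box}(G_1)\le 2\,\mathrm{box}(G)$.
   Context: An interval graph is the intersection graph of a finite family of intervals of the real line. A box representation of dimension $k$ of $G=(V,E)$ is a family of $k$ interval graphs $I_1,\dots,I_k$ on vertex set $V$ with $E=E(I_1)\cap\cdots\cap E(I_k)$; the boxicity $\mathrm{box}(G)$ is the minimum such $k$. *)

(* Defs.v *)
From Stdlib Require Import Reals.
From mathcomp Require Import all_boot.
Set Implicit Arguments. Unset Strict Implicit. Unset Printing Implicit Defensive.

Definition simple_graph (V : finType) (e : rel V) : Prop :=
  irreflexive e /\ symmetric e.

(* Interval graph: intersection graph of a family of closed real intervals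
   [l v, r v] indexed by the vertices. *)
Definition interval_graph (V : finType) (e : rel V) : Prop :=
  simple_graph e /\
  exists l r : V -> R, (forall v, Rle (l v) (r v)) /\
    forall u v, u != v ->
      (e u v <-> Rle (Rmax (l u) (l v)) (Rmin (r u) (r v))).

(* A box representation of dimension k of e: k interval graphs on V whose
   edge sets intersect to the edge set of e. *)
Definition box_rep (V : finType) (e : rel V) (k : nat) (I : 'I_k -> rel V) : Prop :=
  (forall i, interval_graph (I i)) /\
  forall u v, u != v -> (e u v <-> forall i, I i u v).

Definition has_box_rep (V : finType) (e : rel V) (k : nat) : Prop :=
  exists I : 'I_k -> rel V, @box_rep V e k I.

Definition is_boxicity (V : finType) (e : rel V) (b : nat) : Prop :=
  has_box_rep e b /\ forall k, has_box_rep e k -> b <= k.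

Definition add_clique (V : finType) (e : rel V) (B : {set V}) : rel V :=
  fun u v => e u v || [&& u \in B, v \in B & u != v].

(* Main.v *)
Require Import Defs.
From Stdlib Require Import Reals Lra ClassicalEpsilon.
From mathcomp Require Import all_boot.
Set Implicit Arguments. Unset Strict Implicit.

Definition rleb (x y : R) : bool := if Rle_dec x y then true else false.

Definition ig (V : finType) (l r : V -> R) : rel V :=
  fun u v => (u != v) && rleb (Rmax (l u) (l v)) (Rmin (r u) (r v)).

Lemma ig_interval (V : finType) (l r : V -> R) :
  (forall v, Rle (l v) (r v)) -> interval_graph (ig l r).
Proof.
move=> Hlr; split; [split|].
- by move=> u; rewrite /ig eqxx.
- move=> u v; rewrite /ig eq_sym Rmax_comm Rmin_comm //.
- exists l, r; split => // u v Huv; rewrite /ig Huv /rleb /=.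
  by case: Rle_dec.
Qed.

Fixpoint fmin (V : Type) (l : V -> R) (s : seq V) : R :=
  match s with [::] => R0 | x :: s' => Rmin (l x) (fmin l s') end.
Fixpoint fmax (V : Type) (l : V -> R) (s : seq V) : R :=
  match s with [::] => R0 | x :: s' => Rmax (l x) (fmax l s') end.

Lemma fmin_le (V : eqType) (l : V -> R) s x : x \in s -> Rle (fmin l s) (l x).
Proof.
elim: s => //= y s IH; rewrite in_cons => /orP [/eqP -> | H].
- apply Rmin_l.
- apply: Rle_trans (IH H); apply Rmin_r.
Qed.

Lemma fmax_ge (V : eqType) (l : V -> R) s x : x \in s -> Rle (l x) (fmax l s).
Proof.
elim: s => //= y s IH; rewrite in_cons => /orP [/eqP -> | H].
- apply Rmax_l.
- apply: Rle_trans (IH H) _; apply Rmax_r.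
Qed.

Lemma mm x y z w : Rle (Rmax x y) (Rmin z w) <-> (Rle x z /\ Rle x w /\ Rle y z /\ Rle y w).
Proof. unfold Rmax, Rmin; repeat destruct Rle_dec; split; intuition lra. Qed.

Lemma key (a b c d m M : R) (bu bv : bool) :
  Rle a c -> Rle b d -> Rle m a -> Rle m b -> Rle c M -> Rle d M ->
  (Rle (Rmax (if bu then m else a) (if bv then m else b)) (Rmin c d) /\
   Rle (Rmax a b) (Rmin (if bu then M else c) (if bv then M else d)))
  <-> ((bu && bv) \/ Rle (Rmax a b) (Rmin c d)).
Proof.
move=> H1 H2 H3 H4 H5 H6.
rewrite !mm.
case: bu; case: bv => /=; split; try (by left); intuition (try lra; try discriminate).
Qed.

Theorem lemma5 (V : finType) (e : rel V) (A B : {set V}) :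
  simple_graph e ->
  A :&: B = set0 -> A :|: B = [set: V] ->
  forall b b1 : nat,
    is_boxicity e b -> is_boxicity (add_clique e B) b1 ->
    b1 <= 2 * b.
Proof.
move=> _ _ _ b b1 [[I [HI Hrep]] _] [_ Hmin].
rewrite mul2n -addnn; apply: Hmin.
have Hch : forall j, {lr : (V -> R) * (V -> R) | (forall v, Rle (lr.1 v) (lr.2 v)) /\
   forall u v, u != v -> (I j u v <-> Rle (Rmax (lr.1 u) (lr.1 v)) (Rmin (lr.2 u) (lr.2 v)))}.
  move=> j; apply: constructive_indefinite_description.
  case: (HI j) => _ [l [r [H1 H2]]]; by exists (l, r).
pose L j := (proj1_sig (Hch j)).1.
pose Rr j := (proj1_sig (Hch j)).2.
have HLR j v : Rle (L j v) (Rr j v) by case: (proj2_sig (Hch j)) => H _; exact: H.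
have HI' j u v : u != v -> (I j u v <-> Rle (Rmax (L j u) (L j v)) (Rmin (Rr j u) (Rr j v))).
  by case: (proj2_sig (Hch j)) => _ H; exact: H.
pose m j := fmin (L j) (enum V).
pose M j := fmax (Rr j) (enum V).
have Hm j v : Rle (m j) (L j v) by apply: fmin_le; rewrite mem_enum.
have HM j v : Rle (Rr j v) (M j) by apply: fmax_ge; rewrite mem_enum.
pose LA j v := if v \in B then m j else L j v.
pose RB j v := if v \in B then M j else Rr j v.
exists (fun i => match split i with inl j => ig (LA j) (Rr j) | inr j => ig (L j) (RB j) end).
split.
- move=> i; case: (split i) => j; apply: ig_interval => v.
  + rewrite /LA; case: (v \in B) => //; apply: Rle_trans (Hm j v) (HLR j v).
  + rewrite /RB; case: (v \in B) => //; apply: Rle_trans (HLR j v) (HM j v).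
- move=> u v Huv.
  have Hj : forall j, (ig (LA j) (Rr j) u v /\ ig (L j) (RB j) u v) <->
     ((u \in B) && (v \in B) \/ I j u v).
    move=> j; rewrite (HI' j u v Huv) /ig Huv /= /rleb /LA /RB -key;
      last (by apply HM); last (by apply HM); last (by apply Hm); last (by apply Hm);
      last (by apply HLR); last (by apply HLR).
    by case: Rle_dec; case: Rle_dec; split; move=> [? ?].
  have -> : (forall i : 'I_(b + b), match split i with inl j => ig (LA j) (Rr j) | inr j => ig (L j) (RB j) end u v)
     <-> (forall j, (u \in B) && (v \in B) \/ I j u v).
    split.
    + move=> H j; apply/Hj; split.
      * by have := H (unsplit (inl j)); rewrite unsplitK.
      * by have := H (unsplit (inr j)); rewrite unsplitK.
    + move=> H i; case: (split i) => j; by case: (proj2 (Hj j) (H j)).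
  rewrite /add_clique Huv andbT.
  case uvB: ((u \in B) && (v \in B)) => /=.
  + rewrite orbT; split => // _ j; by left.
  + rewrite orbF Hrep //; split => H j; [by right; apply H | by case: (H j)].
Qed.
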